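(* Let $M$ be a timelike surface in $\mathbb{R}^{n,1}$ with a canonical null direction with respect to a constant unit spacelike vector $Z$, let $W$ be the lightlike tangent vector field on $M$ with $\langle Z^\top,W\rangle=-1$, and let $a:=\langle II(W,W),Z^\perp\rangle$. Then $$\nabla_{Z^{\top}}Z^{\top}=0,\quad \nabla_{Z^{\top}}W=0,\quad \nabla_WZ^{\top}=-aZ^{\top},\quad \nabla_WW=aW,$$ and consequently $[Z^{\top},W]=aZ^{\top}$.
   Context: $\mathbb{R}^{n,1}$ is $\mathbb{R}^{n+1}$ with the metric $-dx_1^2+dx_2^2+\dots+dx_{n+1}^2$. A surface is timelike if the induced metric has signature $(1,1)$; a vector $v$ is lightlike if $v\ne0$ and $\langle v,v\rangle=0$. For a constant vector $Z$, $Z=Z^\top+Z^\perp$ along $M$ (tangent and normal parts); $M$ has a canonical null direction with respect to $Z$ if $Z^\top$ is lightlike everywhere on $M$. Since the tangent planes are Lorentzian, there is a unique lightlike tangent field $W$ with $\langle Z^\top,W\rangle=-1$. $\nabla$ is the Levi-Civita connection of $M$ and $II$ its second fundamental form. *)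

(* Defs.v *)
From Stdlib Require Import Reals.
Open Scope R_scope.

(** Vectors of R^{n,1}: coordinates x 0, ..., x n (index 0 is the timelike one);
    values at indices > n are irrelevant. *)
Definition vec := nat -> R.
Definition vzero : vec := fun _ => 0.
Definition vadd (x y : vec) : vec := fun i => x i + y i.
Definition vsub (x y : vec) : vec := fun i => x i - y i.
Definition vscal (c : R) (x : vec) : vec := fun i => c * x i.
Definition veq (n : nat) (x y : vec) : Prop := forall i, (i <= n)%nat -> x i = y i.

Definition mink (n : nat) (x y : vec) : R :=
  sum_f_R0 (fun i => (if Nat.eqb i 0 then -1 else 1) * (x i * y i)) n.

Definition lightlike (n : nat) (v : vec) : Prop := ~ veq n v vzero /\ mink n v v = 0.

Definition gE n (Xu Xv : vec) := mink n Xu Xu.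
Definition gF n (Xu Xv : vec) := mink n Xu Xv.
Definition gG n (Xu Xv : vec) := mink n Xv Xv.
Definition gdet n (Xu Xv : vec) := gE n Xu Xv * gG n Xu Xv - gF n Xu Xv * gF n Xu Xv.

(** A 2x2 symmetric form has signature (1,1) iff its determinant is negative. *)
Definition timelike_plane n (Xu Xv : vec) : Prop := gdet n Xu Xv < 0.

(** Coordinates (w.r.t. Xu, Xv) of the orthogonal (tangential) projection of w
    onto the nondegenerate plane spanned by Xu, Xv: inverse metric applied to
    (<w,Xu>, <w,Xv>). *)
Definition tc1 n (Xu Xv w : vec) : R :=
  (gG n Xu Xv * mink n w Xu - gF n Xu Xv * mink n w Xv) / gdet n Xu Xv.
Definition tc2 n (Xu Xv w : vec) : R :=
  (gE n Xu Xv * mink n w Xv - gF n Xu Xv * mink n w Xu) / gdet n Xu Xv.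
Definition lincomb (c1 c2 : R) (Xu Xv : vec) : vec := vadd (vscal c1 Xu) (vscal c2 Xv).
Definition tanpart n (Xu Xv w : vec) : vec := lincomb (tc1 n Xu Xv w) (tc2 n Xu Xv w) Xu Xv.
Definition norpart n (Xu Xv w : vec) : vec := vsub w (tanpart n Xu Xv w).

Definition partial_u (n : nat) (U : R -> R -> Prop) (F DF : R -> R -> vec) : Prop :=
  forall u v, U u v -> forall i, (i <= n)%nat ->
    derivable_pt_lim (fun s => F s v i) u (DF u v i).
Definition partial_v (n : nat) (U : R -> R -> Prop) (F DF : R -> R -> vec) : Prop :=
  forall u v, U u v -> forall i, (i <= n)%nat ->
    derivable_pt_lim (fun t => F u t i) v (DF u v i).

Definition cont2 (n : nat) (U : R -> R -> Prop) (F : R -> R -> vec) : Prop :=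
  forall u v, U u v -> forall i, (i <= n)%nat -> forall eps, eps > 0 ->
    exists delta, delta > 0 /\ forall s t, Rabs (s - u) < delta -> Rabs (t - v) < delta ->
      Rabs (F s t i - F u v i) < eps.

Definition open2 (U : R -> R -> Prop) : Prop :=
  forall u v, U u v -> exists eps, eps > 0 /\
    forall s t, Rabs (s - u) < eps -> Rabs (t - v) < eps -> U s t.

Definition has_partials (f : R -> R -> R) (u v fu fv : R) : Prop :=
  derivable_pt_lim (fun s => f s v) u fu /\ derivable_pt_lim (fun t => f u t) v fv.

(** Ambient (flat) directional derivative D_Y V at a point, where
    Y = y1 Xu + y2 Xv and V = c1 Xu + c2 Xv, c1, c2 having partials
    (c1u, c1v), (c2u, c2v) there; Xuu = d_u Xu, Xuv = d_v Xu, Xvu = d_u Xv,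
    Xvv = d_v Xv. *)
Definition dirderiv (Xu Xv Xuu Xuv Xvu Xvv : vec)
  (y1 y2 c1 c2 c1u c1v c2u c2v : R) : vec :=
  vadd (vscal y1 (vadd (vadd (vscal c1u Xu) (vscal c1 Xuu)) (vadd (vscal c2u Xv) (vscal c2 Xvu))))
       (vscal y2 (vadd (vadd (vscal c1v Xu) (vscal c1 Xuv)) (vadd (vscal c2v Xv) (vscal c2 Xvv)))).

Definition zt1 n (Xu Xv : R -> R -> vec) (Z : vec) : R -> R -> R :=
  fun u v => tc1 n (Xu u v) (Xv u v) Z.
Definition zt2 n (Xu Xv : R -> R -> vec) (Z : vec) : R -> R -> R :=
  fun u v => tc2 n (Xu u v) (Xv u v) Z.

(** Levi-Civita connection of M: nabla_Y V = (D_Y V)^T (Gauss formula);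
    II(Y,V) = (D_Y V)^perp; Lie bracket in local coordinates:
    [Y,V] = (Y(v1) - V(y1)) Xu + (Y(v2) - V(y2)) Xv. *)
Definition conclusion_at n (Xu Xv Xuu Xuv Xvu Xvv : R -> R -> vec) (Z : vec)
  (w1 w2 : R -> R -> R) (u v : R) : Prop :=
  let xu := Xu u v in let xv := Xv u v in
  let xuu := Xuu u v in let xuv := Xuv u v in let xvu := Xvu u v in let xvv := Xvv u v in
  let z1 := zt1 n Xu Xv Z u v in let z2 := zt2 n Xu Xv Z u v in
  let a1 := w1 u v in let a2 := w2 u v in
  let ZT := lincomb z1 z2 xu xv in
  let W := lincomb a1 a2 xu xv in
  exists z1u z1v z2u z2v a1u a1v a2u a2v : R,
    has_partials (zt1 n Xu Xv Z) u v z1u z1v /\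
    has_partials (zt2 n Xu Xv Z) u v z2u z2v /\
    has_partials w1 u v a1u a1v /\
    has_partials w2 u v a2u a2v /\
    let D_ZT_ZT := dirderiv xu xv xuu xuv xvu xvv z1 z2 z1 z2 z1u z1v z2u z2v in
    let D_ZT_W  := dirderiv xu xv xuu xuv xvu xvv z1 z2 a1 a2 a1u a1v a2u a2v in
    let D_W_ZT  := dirderiv xu xv xuu xuv xvu xvv a1 a2 z1 z2 z1u z1v z2u z2v in
    let D_W_W   := dirderiv xu xv xuu xuv xvu xvv a1 a2 a1 a2 a1u a1v a2u a2v in
    let a := mink n (norpart n xu xv D_W_W) (norpart n xu xv Z) in
    let br1 := (z1 * a1u + z2 * a1v) - (a1 * z1u + a2 * z1v) in
    let br2 := (z1 * a2u + z2 * a2v) - (a1 * z2u + a2 * z2v) in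
    veq n (tanpart n xu xv D_ZT_ZT) vzero /\
    veq n (tanpart n xu xv D_ZT_W) vzero /\
    veq n (tanpart n xu xv D_W_ZT) (vscal (- a) ZT) /\
    veq n (tanpart n xu xv D_W_W) (vscal a W) /\
    veq n (lincomb br1 br2 xu xv) (vscal a ZT).

(* Main.v *)
Require Import Defs.
From Stdlib Require Import Reals.
Open Scope R_scope.
From Stdlib Require Import Lra Psatz.
From Coquelicot Require Coquelicot.

Lemma mink_lin n a b x y z :
  mink n (fun i => a * x i + b * y i) z = a * mink n x z + b * mink n y z.
Proof. unfold mink; induction n; simpl; [ring|]. rewrite IHn. ring. Qed.

Lemma mink_sym n x y : mink n x y = mink n y x.
Proof. unfold mink; induction n; simpl; [ring|]. rewrite IHn. ring. Qed.

Lemma mink_ext n x x' y y' : veq n x x' -> veq n y y' -> mink n x y = mink n x' y'.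
Proof.
  unfold veq, mink; intros Hx Hy; induction n; simpl.
  - rewrite Hx, Hy by lia. ring.
  - rewrite IHn by (intros; apply Hx || apply Hy; lia).
    rewrite Hx, Hy by lia. ring.
Qed.

Lemma mink_add_l n x y z : mink n (vadd x y) z = mink n x z + mink n y z.
Proof. unfold vadd. rewrite <- (Rmult_1_l (mink n x z)), <- (Rmult_1_l (mink n y z)).
  rewrite <- mink_lin. unfold mink; induction n; simpl; [ring|]. rewrite IHn; ring. Qed.
Lemma mink_scal_l n c x z : mink n (vscal c x) z = c * mink n x z.
Proof. unfold mink, vscal; induction n; simpl; [ring|]. rewrite IHn; ring. Qed.
Lemma mink_sub_l n x y z : mink n (vsub x y) z = mink n x z - mink n y z.
Proof. unfold mink, vsub; induction n; simpl; [ring|]. rewrite IHn; ring. Qed.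
Lemma mink_add_r n x y z : mink n z (vadd x y) = mink n z x + mink n z y.
Proof. rewrite !(mink_sym n z). apply mink_add_l. Qed.
Lemma mink_scal_r n c x z : mink n z (vscal c x) = c * mink n z x.
Proof. rewrite !(mink_sym n z). apply mink_scal_l. Qed.
Lemma mink_sub_r n x y z : mink n z (vsub x y) = mink n z x - mink n z y.
Proof. rewrite !(mink_sym n z). apply mink_sub_l. Qed.
Lemma mink_zero_l n z : mink n vzero z = 0.
Proof. unfold mink, vzero; induction n; simpl; [ring|]. rewrite IHn; ring. Qed.

Lemma mink_lc_l n c1 c2 x y z : mink n (lincomb c1 c2 x y) z = c1 * mink n x z + c2 * mink n y z.
Proof. unfold lincomb. rewrite mink_add_l, !mink_scal_l. ring. Qed.
Lemma mink_lc_r n c1 c2 x y z : mink n z (lincomb c1 c2 x y) = c1 * mink n z x + c2 * mink n z y.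
Proof. unfold lincomb. rewrite mink_add_r, !mink_scal_r. ring. Qed.

Lemma tan_prop n xu xv w : gdet n xu xv <> 0 ->
  mink n (tanpart n xu xv w) xu = mink n w xu /\ mink n (tanpart n xu xv w) xv = mink n w xv.
Proof.
  intros HD. unfold tanpart. rewrite !mink_lc_l. unfold tc1, tc2.
  unfold gdet, gE, gF, gG in *. rewrite (mink_sym n xv xu).
  split; field; auto.
Qed.

Lemma tan_eq n xu xv X t1 t2 : gdet n xu xv <> 0 ->
  mink n X xu = t1 * mink n xu xu + t2 * mink n xu xv ->
  mink n X xv = t1 * mink n xu xv + t2 * mink n xv xv ->
  tc1 n xu xv X = t1 /\ tc2 n xu xv X = t2.
Proof.
  intros HD H1 H2. unfold tc1, tc2. unfold gdet, gE, gF, gG in *. rewrite H1, H2.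
  split; field; auto.
Qed.

Lemma nor_lemma n xu xv X Y : gdet n xu xv <> 0 ->
  mink n (norpart n xu xv X) (norpart n xu xv Y) = mink n X (norpart n xu xv Y).
Proof.
  intros HD. unfold norpart at 1. rewrite mink_sub_l.
  assert (mink n (tanpart n xu xv X) (norpart n xu xv Y) = 0).
  { unfold tanpart at 1. rewrite mink_lc_l. unfold norpart.
    rewrite !mink_sub_r. destruct (tan_prop n xu xv Y HD) as [A B].
    rewrite (mink_sym n xu (tanpart _ _ _ _)), (mink_sym n xv (tanpart _ _ _ _)), A, B.
    rewrite (mink_sym n xu Y), (mink_sym n xv Y). ring. }
  rewrite H. ring.
Qed.

Lemma zero2 z1 z2 a1 a2 T1 T2 : z1 * a2 - z2 * a1 <> 0 ->
  z1 * T1 + z2 * T2 = 0 -> a1 * T1 + a2 * T2 = 0 -> T1 = 0 /\ T2 = 0.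
Proof.
  intros Hk H1 H2.
  assert (T1 * (z1 * a2 - z2 * a1) = 0) by (replace (T1 * (z1 * a2 - z2 * a1)) with (a2 * (z1 * T1 + z2 * T2) - z2 * (a1 * T1 + a2 * T2)) by ring; rewrite H1, H2; ring).
  assert (T2 * (z1 * a2 - z2 * a1) = 0) by (replace (T2 * (z1 * a2 - z2 * a1)) with (z1 * (a1 * T1 + a2 * T2) - a1 * (z1 * T1 + z2 * T2)) by ring; rewrite H1, H2; ring).
  split; [apply (Rmult_eq_reg_r (z1 * a2 - z2 * a1)) | apply (Rmult_eq_reg_r (z1 * a2 - z2 * a1))]; lra.
Qed.

Definition Wf1 E F G p q :=
  - (1 / (p*p+q*q)) * (p - (E*p*p + 2*F*p*q + G*q*q) / (2*(p*p+q*q)) * ((G*p - F*q)/(E*G-F*F))).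
Definition Wf2 E F G p q :=
  - (1 / (p*p+q*q)) * (q - (E*p*p + 2*F*p*q + G*q*q) / (2*(p*p+q*q)) * ((E*q - F*p)/(E*G-F*F))).

Lemma pq_nz E F G z1 z2 p q : p = z1*E + z2*F -> q = z1*F + z2*G ->
  ~(z1 = 0 /\ z2 = 0) -> E*G - F*F <> 0 -> p*p+q*q <> 0.
Proof.
  intros Hp Hq Hz HD Hs.
  assert (p = 0 /\ q = 0) as [P Q] by nra.
  apply Hz. split.
  - apply (Rmult_eq_reg_r (E*G-F*F)); auto.
    replace (z1 * (E*G-F*F)) with (G*p - F*q) by (subst; ring). rewrite P, Q; ring.
  - apply (Rmult_eq_reg_r (E*G-F*F)); auto.
    replace (z2 * (E*G-F*F)) with (E*q - F*p) by (subst; ring). rewrite P, Q; ring.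
Qed.

Lemma W_unique E F G z1 z2 a1 a2 p q :
  p = z1*E + z2*F -> q = z1*F + z2*G -> ~(z1 = 0 /\ z2 = 0) -> E*G - F*F <> 0 ->
  z1*p + z2*q = 0 -> a1*(a1*E + a2*F) + a2*(a1*F + a2*G) = 0 -> a1*p + a2*q = -1 ->
  a1 = Wf1 E F G p q /\ a2 = Wf2 E F G p q.
Proof.
  intros Hp Hq Hz HD HQz HQa HB.
  pose proof (pq_nz E F G z1 z2 p q Hp Hq Hz HD) as Hs.
  set (s := p*p+q*q) in *.
  set (c := z1*q - z2*p).
  assert (Hc : c <> 0).
  { intro Hc0. apply Hz.
    assert (z1 * s = 0).
    { replace (z1*s) with (p*(z1*p+z2*q) + q*(z1*q - z2*p)) by (unfold s; ring).
      fold c. rewrite HQz, Hc0. ring. }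
    assert (z2 * s = 0).
    { replace (z2*s) with (q*(z1*p+z2*q) - p*(z1*q - z2*p)) by (unfold s; ring).
      fold c. rewrite HQz, Hc0. ring. }
    split; apply (Rmult_eq_reg_r s); auto; lra. }
  set (al := (a1*q - a2*p)/c). set (be := (z1*a2 - z2*a1)/c).
  assert (E1 : a1 = al*z1 + be*p) by (unfold al, be, c in *; field; auto).
  assert (E2 : a2 = al*z2 + be*q) by (unfold al, be, c in *; field; auto).
  assert (Hbe : be * s = -1).
  { rewrite <- HB. rewrite E1, E2. unfold s.
    replace ((al*z1 + be*p)*p + (al*z2+be*q)*q) with (al*(z1*p+z2*q) + be*(p*p+q*q)) by ring.
    rewrite HQz. ring. }
  assert (HQY : 2*al*be*s + be*be*(E*p*p + 2*F*p*q + G*q*q) = 0).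
  { rewrite <- HQa. rewrite E1, E2. unfold s.
    assert (Hz0 : z1*z1*E + 2*z1*z2*F + z2*z2*G = 0) by (rewrite <- HQz, Hp, Hq; ring).
    rewrite Hp, Hq.
    replace (2 * al * be * ((z1 * E + z2 * F) * (z1 * E + z2 * F) + (z1 * F + z2 * G) * (z1 * F + z2 * G)) +
 be * be * (E * (z1 * E + z2 * F) * (z1 * E + z2 * F) + 2 * F * (z1 * E + z2 * F) * (z1 * F + z2 * G) +
  G * (z1 * F + z2 * G) * (z1 * F + z2 * G))) with
 ((al * z1 + be * (z1 * E + z2 * F)) * ((al * z1 + be * (z1 * E + z2 * F)) * E + (al * z2 + be * (z1 * F + z2 * G)) * F) +
 (al * z2 + be * (z1 * F + z2 * G)) * ((al * z1 + be * (z1 * E + z2 * F)) * F + (al * z2 + be * (z1 * F + z2 * G)) * G) - al*al*(z1*z1*E + 2*z1*z2*F + z2*z2*G)) by ring.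
    rewrite Hz0. ring. }
  assert (Hbe' : be = -1/s) by (apply (Rmult_eq_reg_r s); auto; rewrite Hbe; field; auto).
  assert (Hal : al = (E*p*p + 2*F*p*q + G*q*q) / (2*s*s)).
  { rewrite Hbe' in HQY.
    assert (H' : -2*al + (E*p*p + 2*F*p*q + G*q*q)/(s*s) = 0) by (rewrite <- HQY; field; auto).
    replace al with ((-2*al + (E*p*p + 2*F*p*q + G*q*q)/(s*s)) / -2 + (E*p*p + 2*F*p*q + G*q*q)/(2*s*s)) by (field; auto).
    rewrite H'. field; auto. }
  assert (Z1 : z1 = (G*p - F*q)/(E*G-F*F)) by (subst p q; field; auto).
  assert (Z2 : z2 = (E*q - F*p)/(E*G-F*F)) by (subst p q; field; auto).
  unfold Wf1, Wf2. fold s. rewrite <- Z1, <- Z2. rewrite E1, E2, Hal, Hbe'.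
  split; field; auto.
Qed.

Definition Ex (f : R -> R) x := exists l, derivable_pt_lim f x l.

Lemma dpl_eq f x l l' : derivable_pt_lim f x l -> l = l' -> derivable_pt_lim f x l'.
Proof. intros H ->; exact H. Qed.
Lemma dpl_plus' f g x a b : derivable_pt_lim f x a -> derivable_pt_lim g x b ->
  derivable_pt_lim (fun s => f s + g s) x (a + b).
Proof. intros; apply (derivable_pt_lim_plus f g x a b); auto. Qed.
Lemma dpl_minus' f g x a b : derivable_pt_lim f x a -> derivable_pt_lim g x b ->
  derivable_pt_lim (fun s => f s - g s) x (a - b).
Proof. intros; apply (derivable_pt_lim_minus f g x a b); auto. Qed.
Lemma dpl_mult' f g x a b : derivable_pt_lim f x a -> derivable_pt_lim g x b ->
  derivable_pt_lim (fun s => f s * g s) x (a * g x + f x * b).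
Proof. intros; apply (derivable_pt_lim_mult f g x a b); auto. Qed.
Lemma dpl_const' c x : derivable_pt_lim (fun _ => c) x 0.
Proof. apply derivable_pt_lim_const. Qed.
Lemma dpl_div' f g x a b : derivable_pt_lim f x a -> derivable_pt_lim g x b -> g x <> 0 ->
  derivable_pt_lim (fun s => f s / g s) x ((a * g x - b * f x) / (g x)²).
Proof. intros; apply (derivable_pt_lim_div f g x a b); auto. Qed.

Lemma dpl_ext_loc f g x l r : r > 0 -> (forall y, Rabs (y - x) < r -> f y = g y) ->
  derivable_pt_lim f x l -> derivable_pt_lim g x l.
Proof.
  intros Hr Hfg H eps Heps. destruct (H eps Heps) as [d Hd].
  assert (Hm : 0 < Rmin d r) by (apply Rmin_pos; [apply cond_pos | lra]).
  exists (mkposreal _ Hm). intros h Hh0 Hh. simpl in Hh.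
  rewrite <- !Hfg.
  - apply Hd; auto. apply Rlt_le_trans with (1 := Hh). apply Rmin_l.
  - replace (x - x) with 0 by ring. rewrite Rabs_R0; lra.
  - replace (x + h - x) with h by ring. apply Rlt_le_trans with (1 := Hh). apply Rmin_r.
Qed.

Lemma dpl_mink n A B A' B' x :
  (forall i, (i <= n)%nat -> derivable_pt_lim (fun s => A s i) x (A' i)) ->
  (forall i, (i <= n)%nat -> derivable_pt_lim (fun s => B s i) x (B' i)) ->
  derivable_pt_lim (fun s => mink n (A s) (B s)) x (mink n A' (B x) + mink n (A x) B').
Proof.
  intros HA HB. induction n.
  - eapply dpl_eq.
    + apply (dpl_mult' (fun _ => (if Nat.eqb 0 0 then -1 else 1)) (fun s => A s 0%nat * B s 0%nat)).
      * apply dpl_const'.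
      * apply dpl_mult'; [apply HA | apply HB]; lia.
    + unfold mink; simpl; ring.
  - eapply dpl_eq.
    + apply (dpl_plus' (fun s => mink n (A s) (B s))
         (fun s => (if Nat.eqb (S n) 0 then -1 else 1) * (A s (S n) * B s (S n)))).
      * apply IHn; intros; [apply HA | apply HB]; lia.
      * apply (dpl_mult' (fun _ => (if Nat.eqb (S n) 0 then -1 else 1)) (fun s => A s (S n) * B s (S n))).
        -- apply dpl_const'.
        -- apply dpl_mult'; [apply HA | apply HB]; lia.
    + unfold mink; simpl; ring.
Qed.

Lemma Ex_of f x l : derivable_pt_lim f x l -> Ex f x.
Proof. intros H; exists l; exact H. Qed.
Lemma Ex_plus f g x : Ex f x -> Ex g x -> Ex (fun s => f s + g s) x.
Proof. intros [a Ha] [b Hb]; eexists; apply dpl_plus'; eauto. Qed.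
Lemma Ex_minus f g x : Ex f x -> Ex g x -> Ex (fun s => f s - g s) x.
Proof. intros [a Ha] [b Hb]; eexists; apply dpl_minus'; eauto. Qed.
Lemma Ex_mult f g x : Ex f x -> Ex g x -> Ex (fun s => f s * g s) x.
Proof. intros [a Ha] [b Hb]; eexists; apply dpl_mult'; eauto. Qed.
Lemma Ex_div f g x : Ex f x -> Ex g x -> g x <> 0 -> Ex (fun s => f s / g s) x.
Proof. intros [a Ha] [b Hb] H; eexists; apply dpl_div'; eauto. Qed.
Lemma Ex_const c x : Ex (fun _ => c) x.
Proof. eexists; apply dpl_const'. Qed.
Lemma Ex_opp f x : Ex f x -> Ex (fun s => - f s) x.
Proof. intros [a Ha]. exists (-a). apply (derivable_pt_lim_opp f x a Ha). Qed.
Lemma Ex_ext_loc f g x r : r > 0 -> (forall y, Rabs (y - x) < r -> f y = g y) -> Ex f x -> Ex g x.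
Proof. intros Hr H [l Hl]; exists l; eapply dpl_ext_loc; eauto. Qed.

Definition Good n xu xv Z a1 a2 :=
  timelike_plane n xu xv /\ lightlike n (tanpart n xu xv Z) /\
  lightlike n (lincomb a1 a2 xu xv) /\
  mink n (tanpart n xu xv Z) (lincomb a1 a2 xu xv) = -1.

Definition pd (c1 c2 c1' c2' : R) (xu xv dxu dxv : vec) : vec :=
  vadd (vadd (vscal c1' xu) (vscal c1 dxu)) (vadd (vscal c2' xv) (vscal c2 dxv)).

Lemma good_facts n xu xv Z a1 a2 : Good n xu xv Z a1 a2 ->
  let E := mink n xu xu in let F := mink n xu xv in let G := mink n xv xv in
  let p := mink n Z xu in let q := mink n Z xv in
  let z1 := tc1 n xu xv Z in let z2 := tc2 n xu xv Z in
  E*G - F*F < 0 /\ p = z1*E + z2*F /\ q = z1*F + z2*G /\ ~(z1 = 0 /\ z2 = 0) /\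
  z1*p + z2*q = 0 /\ a1*(a1*E + a2*F) + a2*(a1*F + a2*G) = 0 /\ a1*p + a2*q = -1.
Proof.
  intros [HT [[HZ1 HZ2] [[HW1 HW2] HB]]] E F G p q z1 z2.
  assert (HD : gdet n xu xv <> 0) by (unfold timelike_plane in HT; lra).
  destruct (tan_prop n xu xv Z HD) as [T1 T2].
  assert (Hp : p = z1*E + z2*F).
  { unfold p. rewrite <- T1. unfold tanpart. rewrite mink_lc_l.
    unfold E, F, z1, z2. rewrite (mink_sym n xv xu). ring. }
  assert (Hq : q = z1*F + z2*G).
  { unfold q. rewrite <- T2. unfold tanpart. rewrite mink_lc_l.
    unfold G, F, z1, z2. ring. }
  split; [exact HT|]. split; [exact Hp|]. split; [exact Hq|]. split; [|split; [|split]].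
  - intros [H1 H2]. apply HZ1. intros i _. unfold tanpart, lincomb, vadd, vscal, vzero.
    fold z1 z2. rewrite H1, H2. ring.
  - rewrite <- HZ2. unfold tanpart at 1. rewrite mink_lc_l. fold z1 z2.
    rewrite (mink_sym n xu (tanpart _ _ _ _)), (mink_sym n xv (tanpart _ _ _ _)), T1, T2. unfold p, q. ring.
  - rewrite <- HW2. rewrite mink_lc_l, !mink_lc_r. unfold E, F, G. rewrite (mink_sym n xv xu). ring.
  - rewrite <- HB. rewrite mink_lc_r, T1, T2. unfold p, q. ring.
Qed.

Lemma deriv_zero_loc f x l r c : r > 0 -> (forall y, Rabs (y - x) < r -> f y = c) ->
  derivable_pt_lim f x l -> l = 0.
Proof.
  intros Hr H Hl. apply (uniqueness_limite f x l 0); auto.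
  apply (dpl_ext_loc (fun _ => c) f x 0 r); auto. intros; symmetry; auto. apply dpl_const'.
Qed.

Lemma dpl_lc n c1 c2 c1' c2' (xu xv : R -> vec) dxu dxv x :
  derivable_pt_lim c1 x c1' -> derivable_pt_lim c2 x c2' ->
  (forall i, (i <= n)%nat -> derivable_pt_lim (fun s => xu s i) x (dxu i)) ->
  (forall i, (i <= n)%nat -> derivable_pt_lim (fun s => xv s i) x (dxv i)) ->
  forall i, (i <= n)%nat -> derivable_pt_lim (fun s => lincomb (c1 s) (c2 s) (xu s) (xv s) i) x
     (pd (c1 x) (c2 x) c1' c2' (xu x) (xv x) dxu dxv i).
Proof.
  intros H1 H2 Hu Hv i Hi. unfold lincomb, pd, vadd, vscal.
  eapply dpl_eq.
  - apply dpl_plus'; apply dpl_mult'; first [exact H1 | exact H2 | apply Hu; exact Hi | apply Hv; exact Hi].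
  - cbv beta; ring.
Qed.


Ltac exd := repeat first [ assumption | apply Ex_div | apply Ex_minus | apply Ex_plus
   | apply Ex_mult | apply Ex_opp | apply Ex_const ].

Lemma line n (xu xv : R -> vec) dxu dxv Z (w1 w2 : R -> R) s0 r :
  r > 0 ->
  (forall i, (i <= n)%nat -> derivable_pt_lim (fun s => xu s i) s0 (dxu i)) ->
  (forall i, (i <= n)%nat -> derivable_pt_lim (fun s => xv s i) s0 (dxv i)) ->
  (forall s, Rabs (s - s0) < r -> Good n (xu s) (xv s) Z (w1 s) (w2 s)) ->
  exists z1' z2' a1' a2',
    derivable_pt_lim (fun s => tc1 n (xu s) (xv s) Z) s0 z1' /\
    derivable_pt_lim (fun s => tc2 n (xu s) (xv s) Z) s0 z2' /\
    derivable_pt_lim w1 s0 a1' /\ derivable_pt_lim w2 s0 a2' /\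
    let z1 := tc1 n (xu s0) (xv s0) Z in let z2 := tc2 n (xu s0) (xv s0) Z in
    let Zt := lincomb z1 z2 (xu s0) (xv s0) in let W := lincomb (w1 s0) (w2 s0) (xu s0) (xv s0) in
    let dZ := pd z1 z2 z1' z2' (xu s0) (xv s0) dxu dxv in
    let dW := pd (w1 s0) (w2 s0) a1' a2' (xu s0) (xv s0) dxu dxv in
    mink n dZ Zt = 0 /\ mink n dZ W + mink n Zt dW = 0 /\ mink n dW W = 0 /\
    mink n dZ (xu s0) + mink n Zt dxu = mink n Z dxu /\
    mink n dZ (xv s0) + mink n Zt dxv = mink n Z dxv.
Proof.
  intros Hr Hu Hv Hg.
  assert (HZc : forall i, (i <= n)%nat -> derivable_pt_lim (fun _ : R => Z i) s0 (vzero i)).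
  { intros; apply dpl_const'. }
  assert (HE : Ex (fun s => mink n (xu s) (xu s)) s0) by (eapply Ex_of; apply dpl_mink; eauto).
  assert (HF : Ex (fun s => mink n (xu s) (xv s)) s0) by (eapply Ex_of; apply dpl_mink; eauto).
  assert (HG : Ex (fun s => mink n (xv s) (xv s)) s0) by (eapply Ex_of; apply dpl_mink; eauto).
  assert (Hp : Ex (fun s => mink n Z (xu s)) s0)
    by (eapply Ex_of; apply (dpl_mink n (fun _ => Z) xu vzero dxu); eauto).
  assert (Hq : Ex (fun s => mink n Z (xv s)) s0)
    by (eapply Ex_of; apply (dpl_mink n (fun _ => Z) xv vzero dxv); eauto).
  assert (Hg0 := Hg s0 ltac:(replace (s0 - s0) with 0 by ring; rewrite Rabs_R0; lra)).
  destruct (good_facts _ _ _ _ _ _ Hg0) as (HD & Hp0 & Hq0 & Hz0 & _).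
  assert (HD' : mink n (xu s0) (xu s0) * mink n (xv s0) (xv s0) -
                mink n (xu s0) (xv s0) * mink n (xu s0) (xv s0) <> 0) by lra.
  assert (Hs : mink n Z (xu s0) * mink n Z (xu s0) + mink n Z (xv s0) * mink n Z (xv s0) <> 0)
    by (eapply pq_nz; eauto; lra).
  assert (Hz1 : Ex (fun s => tc1 n (xu s) (xv s) Z) s0).
  { unfold tc1, gG, gF, gE, gdet. exd; try (cbv beta; exact HD'). }
  assert (Hz2 : Ex (fun s => tc2 n (xu s) (xv s) Z) s0).
  { unfold tc2, gG, gF, gE, gdet. exd; try (cbv beta; exact HD'). }
  assert (Hw : Ex w1 s0 /\ Ex w2 s0).
  { split.
    - apply (Ex_ext_loc (fun s => Wf1 (mink n (xu s) (xu s)) (mink n (xu s) (xv s)) (mink n (xv s) (xv s))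
                 (mink n Z (xu s)) (mink n Z (xv s))) w1 s0 r Hr).
      + intros y Hy. destruct (good_facts _ _ _ _ _ _ (Hg y Hy)) as (HDy & Hpy & Hqy & Hzy & H1 & H2 & H3).
        symmetry. eapply W_unique; eauto. lra.
      + unfold Wf1. exd; cbv beta; auto; lra.
    - apply (Ex_ext_loc (fun s => Wf2 (mink n (xu s) (xu s)) (mink n (xu s) (xv s)) (mink n (xv s) (xv s))
                 (mink n Z (xu s)) (mink n Z (xv s))) w2 s0 r Hr).
      + intros y Hy. destruct (good_facts _ _ _ _ _ _ (Hg y Hy)) as (HDy & Hpy & Hqy & Hzy & H1 & H2 & H3).
        symmetry. eapply W_unique; eauto. lra.
      + unfold Wf2. exd; cbv beta; auto; lra. }
  destruct Hz1 as [z1' Hz1], Hz2 as [z2' Hz2], Hw as [[a1' Ha1] [a2' Ha2]].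
  exists z1', z2', a1', a2'. split; [exact Hz1|]. split; [exact Hz2|]. split; [exact Ha1|]. split; [exact Ha2|].
  intros z1 z2 Zt W dZ dW.
  assert (DZ := dpl_lc n _ _ _ _ xu xv dxu dxv s0 Hz1 Hz2 Hu Hv).
  assert (DW := dpl_lc n _ _ _ _ xu xv dxu dxv s0 Ha1 Ha2 Hu Hv).
  cbv beta in DZ.
  split; [|split; [|split; [|split]]].
  - assert (L := dpl_mink n _ _ _ _ s0 DZ DZ).
    apply deriv_zero_loc with (r := r) (c := 0) in L; auto.
    + change (mink n dZ Zt + mink n Zt dZ = 0) in L. rewrite (mink_sym n Zt dZ) in L. lra.
    + intros y Hy. destruct (Hg y Hy) as (_ & [_ H] & _). exact H.
  - assert (L := dpl_mink n _ _ _ _ s0 DZ DW).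
    apply deriv_zero_loc with (r := r) (c := -1) in L; auto.
    all: try (change (mink n dZ W + mink n Zt dW = 0) in L; exact L).
    + intros y Hy. destruct (Hg y Hy) as (_ & _ & _ & H). exact H.
  - assert (L := dpl_mink n _ _ _ _ s0 DW DW).
    apply deriv_zero_loc with (r := r) (c := 0) in L; auto.
    + change (mink n dW W + mink n W dW = 0) in L. rewrite (mink_sym n W dW) in L. lra.
    + intros y Hy. destruct (Hg y Hy) as (_ & _ & [_ H] & _). exact H.
  - assert (L1 := dpl_mink n _ _ _ _ s0 DZ Hu).
    assert (L2 := dpl_mink n (fun _ => Z) xu vzero dxu s0 HZc Hu).
    assert (L := dpl_minus' _ _ _ _ _ L1 L2).
    apply deriv_zero_loc with (r := r) (c := 0) in L; auto.
    + change (mink n dZ (xu s0) + mink n Zt dxu - (mink n vzero (xu s0) + mink n Z dxu) = 0) in L.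
      rewrite mink_zero_l in L. lra.
    + intros y Hy. destruct (good_facts _ _ _ _ _ _ (Hg y Hy)) as (HDy & _).
      destruct (tan_prop n (xu y) (xv y) Z) as [T1 T2]. { unfold gdet, gE, gF, gG. lra. }
      unfold tanpart in T1. cbv beta. change (mink n (lincomb (tc1 n (xu y) (xv y) Z) (tc2 n (xu y) (xv y) Z) (xu y) (xv y)) (xu y) - mink n Z (xu y) = 0). rewrite T1. ring.
  - assert (L1 := dpl_mink n _ _ _ _ s0 DZ Hv).
    assert (L2 := dpl_mink n (fun _ => Z) xv vzero dxv s0 HZc Hv).
    assert (L := dpl_minus' _ _ _ _ _ L1 L2).
    apply deriv_zero_loc with (r := r) (c := 0) in L; auto.
    + change (mink n dZ (xv s0) + mink n Zt dxv - (mink n vzero (xv s0) + mink n Z dxv) = 0) in L.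
      rewrite mink_zero_l in L. lra.
    + intros y Hy. destruct (good_facts _ _ _ _ _ _ (Hg y Hy)) as (HDy & _).
      destruct (tan_prop n (xu y) (xv y) Z) as [T1 T2]. { unfold gdet, gE, gF, gG. lra. }
      unfold tanpart in T2. cbv beta. change (mink n (lincomb (tc1 n (xu y) (xv y) Z) (tc2 n (xu y) (xv y) Z) (xu y) (xv y)) (xv y) - mink n Z (xv y) = 0). rewrite T2. ring.
Qed.

Lemma tan_goal n xu xv X Y t1 t2 : gdet n xu xv <> 0 ->
  mink n X xu = t1 * mink n xu xu + t2 * mink n xu xv ->
  mink n X xv = t1 * mink n xu xv + t2 * mink n xv xv ->
  veq n (lincomb t1 t2 xu xv) Y -> veq n (tanpart n xu xv X) Y.
Proof.
  intros HD H1 H2 HY i Hi. destruct (tan_eq n xu xv X t1 t2 HD H1 H2) as [A1 A2].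
  rewrite <- HY by exact Hi. unfold tanpart, lincomb, vadd, vscal. rewrite A1, A2. reflexivity.
Qed.

Lemma final_alg n xu xv xuu xuv xvu xvv Z a1 a2 z1u z1v z2u z2v a1u a1v a2u a2v :
  Good n xu xv Z a1 a2 -> veq n xuv xvu ->
  (let z1 := tc1 n xu xv Z in let z2 := tc2 n xu xv Z in
    let Zt := lincomb z1 z2 xu xv in let W := lincomb a1 a2 xu xv in
    let dZ := pd z1 z2 z1u z2u xu xv xuu xvu in
    let dW := pd a1 a2 a1u a2u xu xv xuu xvu in
    mink n dZ Zt = 0 /\ mink n dZ W + mink n Zt dW = 0 /\ mink n dW W = 0 /\
    mink n dZ xu + mink n Zt xuu = mink n Z xuu /\
    mink n dZ xv + mink n Zt xvu = mink n Z xvu) ->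
  (let z1 := tc1 n xu xv Z in let z2 := tc2 n xu xv Z in
    let Zt := lincomb z1 z2 xu xv in let W := lincomb a1 a2 xu xv in
    let dZ := pd z1 z2 z1v z2v xu xv xuv xvv in
    let dW := pd a1 a2 a1v a2v xu xv xuv xvv in
    mink n dZ Zt = 0 /\ mink n dZ W + mink n Zt dW = 0 /\ mink n dW W = 0 /\
    mink n dZ xu + mink n Zt xuv = mink n Z xuv /\
    mink n dZ xv + mink n Zt xvv = mink n Z xvv) ->
  let z1 := tc1 n xu xv Z in let z2 := tc2 n xu xv Z in
  let ZT := lincomb z1 z2 xu xv in
  let W := lincomb a1 a2 xu xv in
    let D_ZT_ZT := dirderiv xu xv xuu xuv xvu xvv z1 z2 z1 z2 z1u z1v z2u z2v in
    let D_ZT_W  := dirderiv xu xv xuu xuv xvu xvv z1 z2 a1 a2 a1u a1v a2u a2v in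
    let D_W_ZT  := dirderiv xu xv xuu xuv xvu xvv a1 a2 z1 z2 z1u z1v z2u z2v in
    let D_W_W   := dirderiv xu xv xuu xuv xvu xvv a1 a2 a1 a2 a1u a1v a2u a2v in
    let a := mink n (norpart n xu xv D_W_W) (norpart n xu xv Z) in
    let br1 := (z1 * a1u + z2 * a1v) - (a1 * z1u + a2 * z1v) in
    let br2 := (z1 * a2u + z2 * a2v) - (a1 * z2u + a2 * z2v) in
    veq n (tanpart n xu xv D_ZT_ZT) vzero /\
    veq n (tanpart n xu xv D_ZT_W) vzero /\
    veq n (tanpart n xu xv D_W_ZT) (vscal (- a) ZT) /\
    veq n (tanpart n xu xv D_W_W) (vscal a W) /\
    veq n (lincomb br1 br2 xu xv) (vscal a ZT).
Proof.
  intros Hg Hs Lu Lv z1 z2 ZT W DZZ DZW DWZ DWW a br1 br2.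
  destruct (good_facts _ _ _ _ _ _ Hg) as (HD & Hp & Hq & Hz & HQz & HQa & HB).
  fold z1 z2 in Hp, Hq, Hz, HQz, HB.
  assert (HD' : gdet n xu xv <> 0) by (unfold gdet, gE, gF, gG; lra).
  destruct (tan_prop n xu xv Z HD') as [T1 T2].
  change (tanpart n xu xv Z) with ZT in T1, T2.
  set (E := mink n xu xu) in *. set (F := mink n xu xv) in *. set (G := mink n xv xv) in *.
  set (p := mink n Z xu) in *. set (q := mink n Z xv) in *.
  cbv zeta in Lu, Lv. fold z1 z2 ZT W in Lu, Lv.
  set (dZu := pd z1 z2 z1u z2u xu xv xuu xvu) in *.
  set (dWu := pd a1 a2 a1u a2u xu xv xuu xvu) in *.
  set (dZv := pd z1 z2 z1v z2v xu xv xuv xvv) in *.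
  set (dWv := pd a1 a2 a1v a2v xu xv xuv xvv) in *.
  destruct Lu as (I1u & I2u & I3u & I4u & I5u).
  destruct Lv as (I1v & I2v & I3v & I4v & I5v).
  unfold ZT, W in I1u, I2u, I3u, I1v, I2v, I3v.
  rewrite mink_lc_r in I1u, I1v, I3u, I3v.
  rewrite mink_lc_r, (mink_sym n _ dWu), mink_lc_r in I2u.
  rewrite mink_lc_r, (mink_sym n _ dWv), mink_lc_r in I2v.
  assert (Rf : forall x, veq n x x) by (intros x i _; reflexivity).
  assert (S1 : mink n Z xuv = mink n Z xvu) by (apply mink_ext; auto).
  assert (S2 : mink n ZT xuv = mink n ZT xvu) by (apply mink_ext; auto).
  set (Huu := mink n Z xuu - mink n ZT xuu).
  set (Huv := mink n Z xvu - mink n ZT xvu).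
  set (Hvv := mink n Z xvv - mink n ZT xvv).
  set (Mzu1 := mink n dZu xu) in *. set (Mzu2 := mink n dZu xv) in *.
  set (Mzv1 := mink n dZv xu) in *. set (Mzv2 := mink n dZv xv) in *.
  set (Mwu1 := mink n dWu xu) in *. set (Mwu2 := mink n dWu xv) in *.
  set (Mwv1 := mink n dWv xu) in *. set (Mwv2 := mink n dWv xv) in *.
  assert (Ezu1 : Mzu1 = Huu) by (unfold Huu; lra).
  assert (Ezu2 : Mzu2 = Huv) by (unfold Huv; lra).
  assert (Ezv1 : Mzv1 = Huv) by (unfold Huv; rewrite <- S1, <- S2; lra).
  assert (Ezv2 : Mzv2 = Hvv) by (unfold Hvv; lra).
  assert (Ha : a = a1 * (a1 * Huu + a2 * Huv) + a2 * (a1 * Huv + a2 * Hvv)).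
  { unfold a. rewrite nor_lemma by exact HD'.
    change (norpart n xu xv Z) with (vsub Z ZT).
    change DWW with (vadd (vscal a1 dWu) (vscal a2 dWv)).
    rewrite mink_add_l, !mink_scal_l. unfold dWu, dWv, pd.
    rewrite !mink_add_l, !mink_scal_l, !mink_sub_r.
    rewrite !(mink_sym n xu Z), !(mink_sym n xv Z), !(mink_sym n xu ZT), !(mink_sym n xv ZT).
    rewrite T1, T2. fold p q.
    rewrite !(mink_sym n xuu), !(mink_sym n xuv), !(mink_sym n xvu), !(mink_sym n xvv).
    rewrite S1, S2. unfold Huu, Huv, Hvv. ring. }
  assert (Hk : z1 * a2 - z2 * a1 <> 0).
  { intro Hk0.
    assert (Lg : (a1*p + a2*q)*(a1*p + a2*q) - (z1*p + z2*q) * (a1 * (a1 * E + a2 * F) + a2 * (a1 * F + a2 * G))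
                 = - (E*G - F*F) * (z1 * a2 - z2 * a1) * (z1 * a2 - z2 * a1))
      by (rewrite Hp, Hq; ring).
    rewrite HB, HQz, Hk0 in Lg. lra. }
  assert (TT : z1 * Mwu1 + z2 * Mwv1 = 0 /\ z1 * Mwu2 + z2 * Mwv2 = 0).
  { apply (zero2 z1 z2 a1 a2); auto.
    - replace (z1 * (z1 * Mwu1 + z2 * Mwv1) + z2 * (z1 * Mwu2 + z2 * Mwv2))
        with (z1 * (z1 * Mwu1 + z2 * Mwu2) + z2 * (z1 * Mwv1 + z2 * Mwv2)) by ring.
      replace (z1 * Mwu1 + z2 * Mwu2) with (- (a1 * Mzu1 + a2 * Mzu2)) by lra.
      replace (z1 * Mwv1 + z2 * Mwv2) with (- (a1 * Mzv1 + a2 * Mzv2)) by lra.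
      rewrite Ezu1, Ezu2, Ezv1, Ezv2 in *.
      replace (z1 * - (a1 * Huu + a2 * Huv) + z2 * - (a1 * Huv + a2 * Hvv))
        with (- a1 * (z1 * Huu + z2 * Huv) - a2 * (z1 * Huv + z2 * Hvv)) by ring.
      rewrite I1u, I1v. ring.
    - replace (a1 * (z1 * Mwu1 + z2 * Mwv1) + a2 * (z1 * Mwu2 + z2 * Mwv2))
        with (z1 * (a1 * Mwu1 + a2 * Mwu2) + z2 * (a1 * Mwv1 + a2 * Mwv2)) by ring.
      rewrite I3u, I3v. ring. }
  destruct TT as [TT1 TT2].
  assert (P3 : a1 * Mzu1 + a2 * Mzv1 = - a * p /\ a1 * Mzu2 + a2 * Mzv2 = - a * q).
  { assert (Z2 := zero2 z1 z2 a1 a2 (a1 * Mzu1 + a2 * Mzv1 + a * p) (a1 * Mzu2 + a2 * Mzv2 + a * q) Hk).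
    destruct Z2 as [Z2a Z2b].
    - rewrite Ezu1, Ezu2, Ezv1, Ezv2 in *.
      replace (z1 * (a1 * Huu + a2 * Huv + a * p) + z2 * (a1 * Huv + a2 * Hvv + a * q))
        with (a1 * (z1 * Huu + z2 * Huv) + a2 * (z1 * Huv + z2 * Hvv) + a * (z1 * p + z2 * q)) by ring.
      rewrite I1u, I1v, HQz. ring.
    - rewrite Ezu1, Ezu2, Ezv1, Ezv2 in *. rewrite Ha.
      replace (a1 * (a1 * Huu + a2 * Huv + (a1 * (a1 * Huu + a2 * Huv) + a2 * (a1 * Huv + a2 * Hvv)) * p) +
               a2 * (a1 * Huv + a2 * Hvv + (a1 * (a1 * Huu + a2 * Huv) + a2 * (a1 * Huv + a2 * Hvv)) * q))
        with ((a1 * (a1 * Huu + a2 * Huv) + a2 * (a1 * Huv + a2 * Hvv)) * (1 + (a1 * p + a2 * q))) by ring.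
      rewrite HB. ring.
    - split; lra. }
  assert (P4 : a1 * Mwu1 + a2 * Mwv1 = a * (a1 * E + a2 * F) /\ a1 * Mwu2 + a2 * Mwv2 = a * (a1 * F + a2 * G)).
  { assert (Z2 := zero2 z1 z2 a1 a2 (a1 * Mwu1 + a2 * Mwv1 - a * (a1 * E + a2 * F))
                     (a1 * Mwu2 + a2 * Mwv2 - a * (a1 * F + a2 * G)) Hk).
    destruct Z2 as [Z2a Z2b].
    - replace (z1 * (a1 * Mwu1 + a2 * Mwv1 - a * (a1 * E + a2 * F)) + z2 * (a1 * Mwu2 + a2 * Mwv2 - a * (a1 * F + a2 * G)))
        with (a1 * (z1 * Mwu1 + z2 * Mwu2) + a2 * (z1 * Mwv1 + z2 * Mwv2) - a * (a1 * (z1 * E + z2 * F) + a2 * (z1 * F + z2 * G))) by ring.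
      rewrite <- Hp, <- Hq, HB.
      replace (z1 * Mwu1 + z2 * Mwu2) with (- (a1 * Mzu1 + a2 * Mzu2)) by lra.
      replace (z1 * Mwv1 + z2 * Mwv2) with (- (a1 * Mzv1 + a2 * Mzv2)) by lra.
      rewrite Ezu1, Ezu2, Ezv1, Ezv2, Ha. ring.
    - replace (a1 * (a1 * Mwu1 + a2 * Mwv1 - a * (a1 * E + a2 * F)) + a2 * (a1 * Mwu2 + a2 * Mwv2 - a * (a1 * F + a2 * G)))
        with (a1 * (a1 * Mwu1 + a2 * Mwu2) + a2 * (a1 * Mwv1 + a2 * Mwv2) - a * (a1 * (a1 * E + a2 * F) + a2 * (a1 * F + a2 * G))) by ring.
      rewrite I3u, I3v, HQa. ring.
    - split; lra. }
  assert (MX : forall c1 c2 y1 y2 c1u c1v c2u c2v x,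
    mink n (dirderiv xu xv xuu xuv xvu xvv y1 y2 c1 c2 c1u c1v c2u c2v) x =
    y1 * mink n (pd c1 c2 c1u c2u xu xv xuu xvu) x + y2 * mink n (pd c1 c2 c1v c2v xu xv xuv xvv) x).
  { intros. unfold dirderiv. rewrite mink_add_l, !mink_scal_l. reflexivity. }
  split; [|split; [|split; [|split]]].
  - apply tan_goal with 0 0; auto.
    + unfold DZZ. rewrite MX. fold dZu dZv Mzu1 Mzv1. rewrite Ezu1, Ezv1. 
      replace (z1 * Huu + z2 * Huv) with (z1 * Mzu1 + z2 * Mzu2) by (rewrite Ezu1, Ezu2; ring). rewrite I1u. ring.
    + unfold DZZ. rewrite MX. fold dZu dZv Mzu2 Mzv2. rewrite Ezu2, Ezv2.
      replace (z1 * Huv + z2 * Hvv) with (z1 * Mzv1 + z2 * Mzv2) by (rewrite Ezv1, Ezv2; ring). rewrite I1v. ring.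
    + intros i _. unfold lincomb, vadd, vscal, vzero. ring.
  - apply tan_goal with 0 0; auto.
    + unfold DZW. rewrite MX. fold dWu dWv Mwu1 Mwv1. rewrite TT1. ring.
    + unfold DZW. rewrite MX. fold dWu dWv Mwu2 Mwv2. rewrite TT2. ring.
    + intros i _. unfold lincomb, vadd, vscal, vzero. ring.
  - apply tan_goal with (- a * z1) (- a * z2); auto.
    + unfold DWZ. rewrite MX. fold dZu dZv Mzu1 Mzv1. rewrite (proj1 P3), Hp. fold E F G. ring.
    + unfold DWZ. rewrite MX. fold dZu dZv Mzu2 Mzv2. rewrite (proj2 P3), Hq. fold E F G. ring.
    + intros i _. unfold ZT, lincomb, vadd, vscal, vzero. ring.
  - apply tan_goal with (a * a1) (a * a2); auto.
    + unfold DWW. rewrite MX. fold dWu dWv Mwu1 Mwv1. rewrite (proj1 P4). fold E F G. ring.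
    + unfold DWW. rewrite MX. fold dWu dWv Mwu2 Mwv2. rewrite (proj2 P4). fold E F G. ring.
    + intros i _. unfold W, lincomb, vadd, vscal, vzero. ring.
  - assert (Vb : veq n (lincomb br1 br2 xu xv) (vsub DZW DWZ)).
    { intros i Hi. unfold lincomb, vsub, DZW, DWZ, dirderiv, pd, vadd, vscal, br1, br2.
      rewrite (Hs i Hi). ring. }
    assert (B1 : br1 * E + br2 * F = a * p /\ br1 * F + br2 * G = a * q).
    { split.
      - transitivity (mink n (lincomb br1 br2 xu xv) xu).
        + rewrite mink_lc_l. fold E. rewrite (mink_sym n xv xu). fold E F G. ring.
        + rewrite (mink_ext n _ _ xu xu Vb (Rf xu)), mink_sub_l.
          unfold DZW, DWZ. rewrite !MX. fold dZu dZv dWu dWv Mzu1 Mzv1 Mwu1 Mwv1.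
          rewrite TT1, (proj1 P3). ring.
      - transitivity (mink n (lincomb br1 br2 xu xv) xv).
        + rewrite mink_lc_l. fold G F. ring.
        + rewrite (mink_ext n _ _ xv xv Vb (Rf xv)), mink_sub_l.
          unfold DZW, DWZ. rewrite !MX. fold dZu dZv dWu dWv Mzu2 Mzv2 Mwu2 Mwv2.
          rewrite TT2, (proj2 P3). ring. }
    assert (HDn : E * G - F * F <> 0) by lra.
    assert (Eb1 : br1 = a * z1).
    { apply (Rmult_eq_reg_r (E * G - F * F)); auto.
      replace (br1 * (E * G - F * F)) with (G * (br1 * E + br2 * F) - F * (br1 * F + br2 * G)) by ring.
      rewrite (proj1 B1), (proj2 B1), Hp, Hq. ring. }
    assert (Eb2 : br2 = a * z2).
    { apply (Rmult_eq_reg_r (E * G - F * F)); auto.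
      replace (br2 * (E * G - F * F)) with (E * (br1 * F + br2 * G) - F * (br1 * E + br2 * F)) by ring.
      rewrite (proj1 B1), (proj2 B1), Hp, Hq. ring. }
    intros i _. unfold ZT, lincomb, vadd, vscal. rewrite Eb1, Eb2. ring.
Qed.

Module Sch.
Import Coquelicot.Coquelicot.

Lemma open2_ball U a b : open2 U -> U a b -> exists e : posreal,
  forall s t, Rabs (s - a) < e -> Rabs (t - b) < e -> U s t.
Proof. intros HU Hab. destruct (HU a b Hab) as [e [He H]]. exists (mkposreal e He). exact H. Qed.

Lemma dd_u n U X Xv Xvu i a b : open2 U -> (i <= n)%nat ->
  partial_v n U X Xv -> partial_u n U Xv Xvu -> U a b ->
  is_derive (fun z => Derive (fun t => X z t i) b) a (Xvu a b i).
Proof.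
  intros HU Hi Hv Hvu Hab. destruct (open2_ball U a b HU Hab) as [e He].
  apply is_derive_ext_loc with (f := fun z => Xv z b i).
  - exists e. intros z Hz. symmetry. apply is_derive_unique. apply is_derive_Reals.
    apply Hv; auto. apply He. exact Hz. replace (b - b) with 0 by ring. rewrite Rabs_R0. apply cond_pos.
  - apply is_derive_Reals. apply Hvu; auto.
Qed.

Lemma dd_v n U X Xu Xuv i a b : open2 U -> (i <= n)%nat ->
  partial_u n U X Xu -> partial_v n U Xu Xuv -> U a b ->
  is_derive (fun z => Derive (fun t => X t z i) a) b (Xuv a b i).
Proof.
  intros HU Hi Hu Huv Hab. destruct (open2_ball U a b HU Hab) as [e He].
  apply is_derive_ext_loc with (f := fun z => Xu a z i).
  - exists e. intros z Hz. symmetry. apply is_derive_unique. apply is_derive_Reals.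
    apply Hu; auto. apply He. replace (a - a) with 0 by ring. rewrite Rabs_R0. apply cond_pos. exact Hz.
  - apply is_derive_Reals. apply Huv; auto.
Qed.

Lemma schwarz_veq n U X Xu Xv Xuv Xvu u v : open2 U ->
  partial_u n U X Xu -> partial_v n U X Xv -> partial_v n U Xu Xuv -> partial_u n U Xv Xvu ->
  cont2 n U Xuv -> cont2 n U Xvu -> U u v -> veq n (Xuv u v) (Xvu u v).
Proof.
  intros HU Hu Hv Huv Hvu Cuv Cvu Huv0 i Hi.
  destruct (open2_ball U u v HU Huv0) as [e He].
  assert (S := Schwarz (fun s t => X s t i) u v). cbv beta in S.
  assert (E1 : Derive (fun z => Derive (fun t => X z t i) v) u = Xvu u v i)
    by (apply is_derive_unique; apply (dd_u n U X Xv Xvu i u v HU Hi Hv Hvu Huv0)).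
  assert (E2 : Derive (fun z => Derive (fun t => X t z i) u) v = Xuv u v i)
    by (apply is_derive_unique; apply (dd_v n U X Xu Xuv i u v HU Hi Hu Huv Huv0)).
  rewrite E1, E2 in S.
  symmetry; apply S.
  - exists e. intros a b Ha Hb. assert (Hab : U a b) by (apply He; auto).
    split; [|split; [|split]].
    + eexists. apply is_derive_Reals. apply Hu; eauto.
    + eexists. apply is_derive_Reals. apply Hv; eauto.
    + eexists. apply (dd_u n U X Xv Xvu i a b); auto.
    + eexists. apply (dd_v n U X Xu Xuv i a b); auto.
  - intros eps. destruct (Cvu u v Huv0 i Hi eps (cond_pos eps)) as [d [Hd Hd']].
    assert (Hm : 0 < Rmin d e) by (apply Rmin_pos; [lra | apply cond_pos]).
    exists (mkposreal _ Hm). intros a b Ha Hb. simpl in Ha, Hb.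
    assert (Hab : U a b) by (apply He; eapply Rlt_le_trans; eauto; apply Rmin_r).
    assert (E3 : Derive (fun z => Derive (fun t => X z t i) b) a = Xvu a b i)
      by (apply is_derive_unique; apply (dd_u n U X Xv Xvu i a b HU Hi Hv Hvu Hab)).
    rewrite E3, E1.
    apply Hd'; eapply Rlt_le_trans; eauto; apply Rmin_l.
  - intros eps. destruct (Cuv u v Huv0 i Hi eps (cond_pos eps)) as [d [Hd Hd']].
    assert (Hm : 0 < Rmin d e) by (apply Rmin_pos; [lra | apply cond_pos]).
    exists (mkposreal _ Hm). intros a b Ha Hb. simpl in Ha, Hb.
    assert (Hab : U a b) by (apply He; eapply Rlt_le_trans; eauto; apply Rmin_r).
    assert (E3 : Derive (fun z => Derive (fun t => X t z i) a) b = Xuv a b i)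
      by (apply is_derive_unique; apply (dd_v n U X Xu Xuv i a b HU Hi Hu Huv Hab)).
    rewrite E3, E2.
    apply Hd'; eapply Rlt_le_trans; eauto; apply Rmin_l.
Qed.

End Sch.
Import Sch.

Theorem mainTheorem3 (n : nat) (U : R -> R -> Prop)
  (X Xu Xv Xuu Xuv Xvu Xvv : R -> R -> vec) (Z : vec) (w1 w2 : R -> R -> R) :
  open2 U ->
  partial_u n U X Xu -> partial_v n U X Xv ->
  partial_u n U Xu Xuu -> partial_v n U Xu Xuv ->
  partial_u n U Xv Xvu -> partial_v n U Xv Xvv ->
  cont2 n U Xuu -> cont2 n U Xuv -> cont2 n U Xvu -> cont2 n U Xvv ->
  (forall u v, U u v -> timelike_plane n (Xu u v) (Xv u v)) ->
  mink n Z Z = 1 ->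
  (forall u v, U u v -> lightlike n (tanpart n (Xu u v) (Xv u v) Z)) ->
  (forall u v, U u v ->
     lightlike n (lincomb (w1 u v) (w2 u v) (Xu u v) (Xv u v)) /\
     mink n (tanpart n (Xu u v) (Xv u v) Z) (lincomb (w1 u v) (w2 u v) (Xu u v) (Xv u v)) = -1) ->
  forall u v, U u v -> conclusion_at n Xu Xv Xuu Xuv Xvu Xvv Z w1 w2 u v.
Proof.
  intros HU Hpu Hpv Hpuu Hpuv Hpvu Hpvv Cuu Cuv Cvu Cvv HT HZZ HZl HW u v Huv.
  destruct (HU u v Huv) as [e [He HUe]].
  assert (Gd : forall s t, U s t -> Good n (Xu s t) (Xv s t) Z (w1 s t) (w2 s t)).
  { intros s t Hst. destruct (HW s t Hst). unfold Good. split; [apply HT; auto|]. split; [apply HZl; auto|]. split; auto. }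
  assert (Hr0 : Rabs (v - v) < e) by (replace (v - v) with 0 by ring; rewrite Rabs_R0; lra).
  assert (Hr1 : Rabs (u - u) < e) by (replace (u - u) with 0 by ring; rewrite Rabs_R0; lra).
  destruct (line n (fun s => Xu s v) (fun s => Xv s v) (Xuu u v) (Xvu u v) Z
              (fun s => w1 s v) (fun s => w2 s v) u e He (Hpuu u v Huv) (Hpvu u v Huv))
    as (z1u & z2u & a1u & a2u & Dz1u & Dz2u & Da1u & Da2u & Lu).
  { intros s Hs. apply Gd. apply HUe; auto. }
  destruct (line n (fun t => Xu u t) (fun t => Xv u t) (Xuv u v) (Xvv u v) Z
              (fun t => w1 u t) (fun t => w2 u t) v e He (Hpuv u v Huv) (Hpvv u v Huv))
    as (z1v & z2v & a1v & a2v & Dz1v & Dz2v & Da1v & Da2v & Lv).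
  { intros t Ht. apply Gd. apply HUe; auto. }
  unfold conclusion_at.
  exists z1u, z1v, z2u, z2v, a1u, a1v, a2u, a2v.
  split; [split; assumption|]. split; [split; assumption|].
  split; [split; assumption|]. split; [split; assumption|].
  apply final_alg; auto.
  exact (schwarz_veq n U X Xu Xv Xuv Xvu u v HU Hpu Hpv Hpuv Hpvu Cuv Cvu Huv).
Qed.
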